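(* Let $H$ be a connected non-trivial core with a factorization $H\cong H_1\times\dots\times H_m$ such that $H_i\not\cong K_1^*$ for all $i\in[m]$. Then for every $i\in[m]$, $H_i$ is a connected non-trivial core, and $H_i$ is incomparable with $H_j$ for every $j\in[m]\setminus\{i\}$.
   Context: Graphs are finite, undirected, without parallel edges, loops allowed; $K_1^*$ is the one-vertex graph with a loop. A homomorphism is an edge-preserving vertex map. A core is a graph with no homomorphism to a proper subgraph of itself; it is trivial if isomorphic to $K_1$, $K_1^*$ or $K_2$, non-trivial otherwise. Graphs $G,H$ are incomparable if there is no homomorphism $G\to H$ and none $H\to G$. The direct product $H_1\times H_2$ has vertex set $V(H_1)\times V(H_2)$ with $(x_1,y_1)(x_2,y_2)$ an edge iff $x_1x_2\in E(H_1)$ and $y_1y_2\in E(H_2)$. *)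

(* Defs.v *)
From mathcomp Require Import all_boot.
Set Implicit Arguments. Unset Strict Implicit. Unset Printing Implicit Defensive.

(* A finite undirected graph without parallel edges, loops allowed:
   a finite vertex type with a symmetric adjacency relation. *)
Record graph := Graph {
  vtx :> finType;
  adj : rel vtx;
  adj_sym : symmetric adj }.

Definition is_hom (G H : graph) (f : G -> H) : Prop :=
  forall x y : G, adj x y -> adj (f x) (f y).

Definition hom_exists (G H : graph) : Prop := exists f : G -> H, is_hom f.

Definition isomorphic (G H : graph) : Prop :=
  exists f : G -> H, bijective f /\ forall x y : G, adj (f x) (f y) = adj x y.

(* A subgraph of G is given by a vertex set A and a symmetric edge relation e
   contained in adj and supported on A; it is proper unless A is everything
   and e = adj.  A core has no homomorphism to a proper subgraph of itself. *)
Definition is_core (G : graph) : Prop :=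
  forall (A : {set G}) (e : rel G),
    symmetric e ->
    (forall x y, e x y -> [&& adj x y, x \in A & y \in A]) ->
    forall f : G -> G,
      (forall x, f x \in A) ->
      (forall x y, adj x y -> e (f x) (f y)) ->
      A = setT /\ (forall x y, e x y = adj x y).

Definition connected (G : graph) : Prop :=
  (exists x : G, True) /\ forall x y : G, connect (@adj G) x y.

Lemma K1_sym : symmetric (fun _ _ : unit => false). Proof. by []. Qed.
Definition K1 : graph := Graph K1_sym.
Lemma K1s_sym : symmetric (fun _ _ : unit => true). Proof. by []. Qed.
Definition K1star : graph := Graph K1s_sym.
Lemma K2_sym : symmetric (fun x y : bool => x != y).
Proof. by move=> x y; rewrite eq_sym. Qed.
Definition K2 : graph := Graph K2_sym.

Definition trivial_graph (G : graph) : Prop :=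
  isomorphic G K1 \/ isomorphic G K1star \/ isomorphic G K2.

Definition incomparable (G H : graph) : Prop :=
  ~ hom_exists G H /\ ~ hom_exists H G.

Definition prod_adj (m : nat) (Hs : 'I_m -> graph)
  (x y : {dffun forall i : 'I_m, Hs i}) : bool :=
  [forall i, adj (x i) (y i)].

Lemma prod_adj_sym m (Hs : 'I_m -> graph) : symmetric (@prod_adj m Hs).
Proof.
move=> x y; apply/forallP/forallP => H i; by rewrite adj_sym.
Qed.

Definition prod_graph (m : nat) (Hs : 'I_m -> graph) : graph :=
  Graph (@prod_adj_sym m Hs).

(* Main.v *)
Require Import Defs.
From mathcomp Require Import all_boot.
Set Implicit Arguments. Unset Strict Implicit. Unset Printing Implicit Defensive.

Definition endo_surj (G : graph) :=
  forall f : G -> G, is_hom f -> forall y, exists x, f x = y.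

Lemma core_endo (G : graph) : is_core G -> endo_surj G.
Proof.
move=> C f hf y.
pose A := [set f x | x in G].
pose e := fun a b : G => [&& adj a b, a \in A & b \in A].
have es : symmetric e.
  by move=> a b; rewrite /e adj_sym; case: (a \in A); case: (b \in A); rewrite ?andbT ?andbF.
have fe : forall x y, adj x y -> e (f x) (f y).
  by move=> a b h; rewrite /e hf // !imset_f ?inE.
have fA : forall x, f x \in A by move=> x; apply: imset_f.
have [AT _] := C A e es (fun x y h => h) f fA fe.
have : y \in A by rewrite AT inE.
by case/imsetP => x _ ->; exists x.
Qed.

Lemma endo_core (G : graph) : endo_surj G -> is_core G.
Proof.
move=> S A e es eadj f fA fe.
have hf : is_hom f by move=> x y /fe /eadj /and3P[].
split.
  by apply/setP => y; rewrite inE; have [x <-] := S f hf y; exact: fA.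
have [g fg] : exists g : G -> G, cancel g f.
  exists (fun y => odflt y [pick x | f x == y]) => y.
  case: pickP => [x /eqP //|].
  by have [x <-] := S f hf y => /(_ x); rewrite eqxx.
have finj : injective f.
  have ginj : injective g := can_inj fg.
  have [h gh hg] := injF_bij ginj.
  move=> a b fab; by rewrite -(hg a) -(hg b) -[h a]fg -[h b]fg hg hg fab.
move=> x y; apply/idP/idP => [/eadj/andP[] //|xy].
pose Sd := [set p : G * G | adj p.1 p.2].
pose F := fun p : G * G => (f p.1, f p.2).
have Finj : injective F by move=> [a b] [c d] [/finj -> /finj ->].
have : F @: Sd == Sd.
  rewrite eqEcard card_imset // leqnn andbT.
  by apply/subsetP => p /imsetP[[a b]]; rewrite inE /= => ab ->; rewrite inE /= hf.
move/eqP => E.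
have : (x, y) \in F @: Sd by rewrite E inE.
by case/imsetP => [[a b]]; rewrite inE /= => ab [-> ->]; exact: fe.
Qed.

Lemma hom_connect (G K : graph) (f : G -> K) (x y : G) :
  is_hom f -> connect (@adj G) x y -> connect (@adj K) (f x) (f y).
Proof.
move=> hf /connectP[p pp ->]; apply/connectP; exists (map f p).
  exact: homo_path pp.
by rewrite last_map.
Qed.

Lemma has_edge (G : graph) : connected G -> ~ trivial_graph G ->
  exists a b : G, adj a b.
Proof.
move=> [[x0 _] C] NT.
case: (boolP [exists a : G, exists b : G, adj a b]) => [/existsP[a /existsP[b ab]]|N].
  by exists a, b.
have noe : forall a b : G, adj a b = false.
  move=> a b; apply/negbTE; apply: contra N => ab; apply/existsP; exists a.
  by apply/existsP; exists b.
have eq1 : forall a : G, a = x0.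
  move=> a; have /connectP[p pp ->] := C x0 a.
  by case: p pp => //= b p; rewrite noe.
exfalso; apply: NT; left.
exists (fun _ => tt); split; last by move=> a b; rewrite noe.
by exists (fun _ => x0) => [a|[]] //; rewrite -eq1.
Qed.
Section Prod.
Variables (m : nat) (Hs : 'I_m -> graph).
Notation P := (prod_graph Hs).

Definition upd (x : P) (j : 'I_m) (c : Hs j) : P :=
  [ffun k => match j =P k with
             | ReflectT e => eq_rect j (fun k => vtx (Hs k)) c k e
             | ReflectF _ => x k end].

Arguments upd : clear implicits.
Lemma upd_eq (x : P) (j : 'I_m) (c : Hs j) : upd x j c j = c.
Proof.
rewrite /upd ffunE; case: (j =P j) => // e.
by rewrite (eq_axiomK e).
Qed.

Lemma upd_neq (x : P) (j : 'I_m) (c : Hs j) (k : 'I_m) : j != k -> upd x j c k = x k.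
Proof. by move=> njk; rewrite /upd ffunE; case: (j =P k) => // e; rewrite e eqxx in njk. Qed.

Lemma adjP (x y : P) : adj x y = [forall i, adj (x i) (y i)].
Proof. by []. Qed.


Lemma lift_hom (i j : 'I_m) (g : Hs i -> Hs j) :
  is_hom g -> is_hom (fun x : P => upd x j (g (x i))).
Proof.
move=> hg x y /forallP xy; apply/forallP => k.
case: (eqVneq j k) => [<-|njk]; first by rewrite !upd_eq; exact: hg (xy i).
by rewrite !upd_neq.
Qed.

Lemma proj_hom (i : 'I_m) : is_hom (fun x : P => x i).
Proof. by move=> x y /forallP. Qed.

Lemma P_facts (H : graph) : isomorphic H P -> connected H -> is_core H ->
  ~ trivial_graph H ->
  endo_surj P /\ (forall x y : P, connect (@adj P) x y) /\ exists a b : P, adj a b.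
Proof.
move=> [phi [[psi phK psK] phA]] HC Hc HNT.
have psA : forall u v, adj (psi u) (psi v) = adj u v.
  by move=> u v; rewrite -phA !psK.
split; [|split].
- move=> f hf y.
  have hh : is_hom (fun x => psi (f (phi x))).
    by move=> a b ab; rewrite psA; apply: hf; rewrite phA.
  have [x hx] := core_endo Hc hh (psi y).
  by exists (phi x); rewrite -[f _]psK hx psK.
- move=> x y; rewrite -(psK x) -(psK y); apply: hom_connect; last exact: HC.2.
  by move=> a b; rewrite phA.
- have [a [b ab]] := has_edge HC HNT.
  by exists (phi a), (phi b); rewrite phA.
Qed.

End Prod.
Arguments upd {m Hs} x j c.

Theorem mainTheorem11 (H : graph) (m : nat) (Hs : 'I_m -> graph) :
  connected H -> is_core H -> ~ trivial_graph H ->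
  isomorphic H (prod_graph Hs) ->
  (forall i, ~ isomorphic (Hs i) K1star) ->
  forall i : 'I_m,
    (connected (Hs i) /\ is_core (Hs i) /\ ~ trivial_graph (Hs i)) /\
    (forall j : 'I_m, j != i -> incomparable (Hs i) (Hs j)).
Proof.
move=> HC Hc HNT Hiso HK.
have [S [PC [a [b ab]]]] := P_facts Hiso HC Hc HNT.
have edge : forall i, adj (a i) (b i) by move=> i; move/forallP: ab.
have noHom : forall i j : 'I_m, i != j -> ~ hom_exists (Hs i) (Hs j).
  move=> i j nij [g hg].
  have allc : forall c : Hs j, c = g (a i).
    move=> c; have [y hy] := S _ (lift_hom hg) (upd a j c).
    have h1 := congr1 (fun z : prod_graph Hs => z j) hy; have h2 := congr1 (fun z : prod_graph Hs => z i) hy.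
    move: h1 h2 => /=; rewrite !upd_eq upd_neq 1?eq_sym // upd_neq 1?eq_sym //.
    by move=> <- ->.
  apply: (HK j); exists (fun _ => tt); split.
    by exists (fun _ => g (a i)) => [x|[]] //; rewrite -allc.
  move=> x y; rewrite (allc x) (allc y).
  by have := edge j; rewrite (allc (a j)) (allc (b j)) => ->.
move=> i; split; last first.
  by move=> j nji; split; apply: noHom; rewrite // eq_sym.
split; [|split].
- split; first by exists (a i).
  move=> x y; have := hom_connect (proj_hom i) (PC (upd a i x) (upd a i y)).
  by rewrite !upd_eq.
- apply: endo_core => f hf y.
  have [x hx] := S _ (lift_hom hf) (upd a i y).
  by exists (x i); have := congr1 (fun z : prod_graph Hs => z i) hx; rewrite /= !upd_eq.
- case=> [[psi [_ psA]]|[/HK //|[psi [[chi psK chK] psA]]]].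
    by have := edge i; rewrite -psA.
  case: (pickP (fun j => j != i)) => [j /= nji|allj].
    have nij : i != j by rewrite eq_sym.
    apply: (noHom i j nij).
    have ej := edge j.
    exists (fun x => if psi x then a j else b j) => x y.
    rewrite -psA /=; case: (psi x); case: (psi y) => //= _.
    by rewrite adj_sym.
  have alli : forall k, k = i by move=> k; have := allj k => /= /negbFE /eqP.
  apply: HNT; right; right.
  case: Hiso => phi [phB phA].
  exists (fun x => psi (phi x i)); split.
    have pB : bijective (fun y : prod_graph Hs => y i).
      exists (fun c => upd a i c) => [x|c]; last by rewrite upd_eq.
      by apply/ffunP => k; have := alli k => ->; rewrite upd_eq.
    have cB : bijective psi by exists chi.
    exact: (bij_comp (bij_comp cB pB) phB).
  move=> x y; rewrite psA -phA /=; apply/idP/forallP => [h k|/(_ i) //].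
  by have := alli k => ->.
Qed.
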